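(* Let $P_{B(K^{\pm})}$ be the unital associative complex algebra generated by elements $B_i^{+}, B_i^{-}$ ($i=1,2,\ldots$) and $K^{+}, K^{-}$ subject to the relations $$\big[\{B_i^{\xi}, B_j^{\eta}\}, B_k^{\epsilon}\big] = (\epsilon-\eta)\delta_{jk}B_i^{\xi} + (\epsilon-\xi)\delta_{ik}B_j^{\eta}\quad(\xi,\eta,\epsilon\in\{\pm1\},\ i,j,k=1,2,\ldots),$$ $$K^{+}K^{-} = K^{-}K^{+} = 1,\qquad \{K^{+}, B_i^{\pm}\} = 0 = \{K^{-}, B_i^{\pm}\}\quad (i=1,2,\ldots).$$ Then there is a unique algebra homomorphism $\Delta: P_{B(K^{\pm})}\to P_{B(K^{\pm})}\otimes P_{B(K^{\pm})}$ (ordinary tensor product algebra, $(a\otimes b)(c\otimes d)=ac\otimes bd$), a unique algebra homomorphism $\varepsilon: P_{B(K^{\pm})}\to\mathbb{C}$ and a unique algebra anti-homomorphism $S: P_{B(K^{\pm})}\to P_{B(K^{\pm})}$ with $$\Delta(B_i^{\pm}) = B_i^{\pm}\otimes 1 + K^{\pm}\otimes B_i^{\pm},\quad \Delta(K^{\pm}) = K^{\pm}\otimes K^{\pm},\quad \varepsilon(B_i^{\pm}) = 0,\quad \varepsilon(K^{\pm}) = 1,$$ $$S(B_i^{\pm}) = B_i^{\pm}K^{\mp},\qquad S(K^{\pm}) = K^{\mp},$$ for all $i=1,2,\ldots$, and with these maps $P_{B(K^{\pm})}$ is an (ordinary) Hopf algebra.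
   Context: $[A,B]=AB-BA$ and $\{A,B\}=AB+BA$; in the relations the signs $\xi,\eta,\epsilon$ are read as the integers $\pm1$. In the formulas for $\Delta$ and $S$ the upper signs correspond (e.g. $\Delta(B_i^{+}) = B_i^{+}\otimes 1 + K^{+}\otimes B_i^{+}$, $S(B_i^{+}) = B_i^{+}K^{-}$). *)

(* Defs.v *)
From HB Require Import structures.
From mathcomp Require Import all_boot all_order all_algebra.
From mathcomp Require Import complex.
From mathcomp Require Export reals.
Set Implicit Arguments. Unset Strict Implicit. Unset Printing Implicit Defensive.
Import Order.TTheory GRing.Theory Num.Theory.
Local Open Scope ring_scope.

Section Defs.
Variable C : fieldType.

Definition lin (U W : lmodType C) (f : U -> W) :=
  forall (a : C) (u v : U), f (a *: u + v) = a *: f u + f v.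
Definition bilin (U V W : lmodType C) (f : U -> V -> W) :=
  (forall v, lin (fun u => f u v)) /\ (forall u, lin (f u)).

(* (T, t) is a tensor product of U and V, [lift W f] being the linear map
   T -> W induced by a bilinear f : U -> V -> W (universal property). *)
Definition is_tensor (U V T : lmodType C) (t : U -> V -> T)
    (lift : forall W : lmodType C, (U -> V -> W) -> T -> W) :=
  bilin t /\
  forall (W : lmodType C) (f : U -> V -> W), bilin f ->
    [/\ lin (lift W f),
        (forall u v, lift W f (t u v) = f u v) &
        (forall g : T -> W, lin g -> (forall u v, g (t u v) = f u v) ->
           forall x, g x = lift W f x)].

Definition is_algtensor (A B T : algType C) (t : A -> B -> T)
    (lift : forall W : lmodType C, (A -> B -> W) -> T -> W) :=
  [/\ is_tensor t lift,
      (forall a b c d, t a b * t c d = t (a * c) (b * d)) &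
      t 1 1 = 1].

Definition alg_hom (A D : algType C) (f : A -> D) :=
  [/\ lin f, (forall x y, f (x * y) = f x * f y) & f 1 = 1].
Definition alg_antihom (A D : algType C) (f : A -> D) :=
  [/\ lin f, (forall x y, f (x * y) = f y * f x) & f 1 = 1].
Definition char_hom (A : algType C) (f : A -> C) :=
  [/\ (forall (a : C) (u v : A), f (a *: u + v) = a * f u + f v),
      (forall x y, f (x * y) = f x * f y) & f 1 = 1].

(* signs xi in {+1,-1}: true = +, false = - *)
Definition sgn (s : bool) : C := if s then 1 else -1.
Definition kd (i j : nat) : C := (i == j)%:R.

(* Generators: b s i = B_{i+1}^s (i : nat, so index i stands for i+1),
   k s = K^s.  Defining relations of P_{B(K^pm)}. *)
Definition PB_rels (D : algType C) (b : bool -> nat -> D) (k : bool -> D) :=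
  [/\ (forall (x y z : bool) (i j l : nat),
         let ac := b x i * b y j + b y j * b x i in
         ac * b z l - b z l * ac =
         ((sgn z - sgn y) * kd j l) *: b x i + ((sgn z - sgn x) * kd i l) *: b y j),
      k true * k false = 1, k false * k true = 1 &
      (forall (s u : bool) (i : nat), k s * b u i + b u i * k s = 0)].

(* (A, b, k) is the unital associative algebra presented by these generators
   and relations: universal property among C-algebras. *)
Definition is_PB (A : algType C) (b : bool -> nat -> A) (k : bool -> A) :=
  PB_rels b k /\
  forall (D : algType C) (b' : bool -> nat -> D) (k' : bool -> D),
    PB_rels b' k' ->
    exists f : A -> D,
      [/\ alg_hom f, (forall s i, f (b s i) = b' s i), (forall s, f (k s) = k' s) &
          (forall g : A -> D, alg_hom g -> (forall s i, g (b s i) = b' s i) ->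
             (forall s, g (k s) = k' s) -> forall x, g x = f x)].

(* Hopf algebra axioms for (A, m, 1, Delta, eps, S), with A (x) A given by
   (AA, t, liftAA) and (A (x) A) (x) A given by (AAA, t3, lift3). *)
Definition is_hopf (A AA : algType C) (AAA : lmodType C)
    (t : A -> A -> AA) (liftAA : forall W : lmodType C, (A -> A -> W) -> AA -> W)
    (t3 : AA -> A -> AAA)
    (Delta : A -> AA) (eps : A -> C) (S : A -> A) :=
  [/\ alg_hom Delta /\ char_hom eps /\ lin S,
      (* coassociativity: (Delta (x) id) Delta = (id (x) Delta) Delta *)
      (forall a, liftAA AAA (fun x y => t3 (Delta x) y) (Delta a) =
                 liftAA AAA (fun x y => liftAA AAA (fun p q => t3 (t x p) q) (Delta y))
                        (Delta a)),
      (forall a, liftAA A (fun x y => eps x *: y) (Delta a) = a /\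
                 liftAA A (fun x y => eps y *: x) (Delta a) = a) &
      (* antipode: m (S (x) id) Delta = m (id (x) S) Delta = eta eps *)
      (forall a, liftAA A (fun x y => S x * y) (Delta a) = eps a *: 1 /\
                 liftAA A (fun x y => x * S y) (Delta a) = eps a *: 1)].
End Defs.

(* Main.v *)
Require Import Defs.
From HB Require Import structures.
From mathcomp Require Import all_boot all_order all_algebra ssrAC.
From mathcomp Require Import complex reals.
From Stdlib Require Import ClassicalEpsilon.
Import Order.TTheory GRing.Theory Num.Theory.
Local Open Scope ring_scope.

Section LinFacts.
Variable C : fieldType.
Variables (U W : lmodType C) (f : U -> W) (Hf : lin f).
Lemma lin0 : f 0 = 0.
Proof.
have h := Hf 1 0 0; rewrite !scale1r addr0 in h.
by have := congr1 (fun z => z - f 0) h; rewrite addrK subrr => <-.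
Qed.
Lemma linD u v : f (u + v) = f u + f v.
Proof. by have := Hf 1 u v; rewrite !scale1r. Qed.
Lemma linZ a u : f (a *: u) = a *: f u.
Proof. by have := Hf a u 0; rewrite !addr0 lin0 addr0. Qed.
Lemma linN u : f (- u) = - f u.
Proof. by rewrite -scaleN1r linZ scaleN1r. Qed.
Lemma linB u v : f (u - v) = f u - f v.
Proof. by rewrite linD linN. Qed.
Lemma lin_sum (I : Type) (s : seq I) (F : I -> U) :
  f (\sum_(i <- s) F i) = \sum_(i <- s) f (F i).
Proof.
elim: s => [|x s IH]; first by rewrite !big_nil lin0.
by rewrite !big_cons linD IH.
Qed.
End LinFacts.
Arguments lin0 {C U W f}.
Arguments linD {C U W f}.
Arguments linZ {C U W f}.
Arguments linN {C U W f}.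
Arguments linB {C U W f}.
Arguments lin_sum {C U W f}.


Section LinBuild.
Variable C : fieldType.
Lemma lin_sumf (U W : lmodType C) (I : Type) (s : seq I) (F : I -> U -> W) :
  (forall i, lin (F i)) -> lin (fun u => \sum_(i <- s) F i u).
Proof.
move=> H a u v; elim: s => [|x s IH]; first by rewrite !big_nil scaler0 addr0.
rewrite !big_cons IH H scalerDr.
by rewrite -!addrA; congr (_ + _); rewrite addrCA.
Qed.
Lemma lin_comp (U V W : lmodType C) (f : U -> V) (g : V -> W) :
  lin f -> lin g -> lin (fun u => g (f u)).
Proof. by move=> hf hg a u v; rewrite hf hg. Qed.
Lemma lin_mulr (A : algType C) (W : lmodType C) (f : A -> W) (c : A) :
  lin f -> lin (fun u => f (u * c)).
Proof. by move=> hf a u v; rewrite mulrDl -scalerAl hf. Qed.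
Lemma lin_mull (A : algType C) (W : lmodType C) (f : A -> W) (c : A) :
  lin f -> lin (fun u => f (c * u)).
Proof. by move=> hf a u v; rewrite mulrDr -scalerAr hf. Qed.
Lemma lin_id (U : lmodType C) : lin (fun u : U => u).
Proof. by []. Qed.
Lemma lin_const0 (U W : lmodType C) : lin (fun _ : U => (0 : W)).
Proof. by move=> a u v; rewrite scaler0 addr0. Qed.
End LinBuild.
Section KFacts.
Variables (C : fieldType) (A : algType C) (b : bool -> nat -> A) (k : bool -> A).
Hypothesis Hr : PB_rels b k.
Lemma kk1 y z : y != z -> k y * k z = 1.
Proof. by case: Hr => _ R2 R3 _; case: y; case: z. Qed.
Lemma kC s u : k s * k u = k u * k s.
Proof.
case: (eqVneq s u) => [->//|h]. rewrite !kk1 //. by rewrite eq_sym.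
Qed.
Lemma kb s u i : k s * b u i = - (b u i * k s).
Proof. case: Hr => _ _ _ R4. by apply/eqP; rewrite -addr_eq0 R4. Qed.
Lemma kev (kap u v : A) : kap * u = - (u * kap) -> kap * v = - (v * kap) ->
  kap * (u * v) = (u * v) * kap.
Proof. move=> hu hv. by rewrite mulrA hu mulNr -[u * kap * v]mulrA hv mulrN opprK mulrA. Qed.
Lemma kev2 (kap lam w : A) : kap * w = - (w * kap) -> lam * w = - (w * lam) ->
  (kap * lam) * w = w * (kap * lam).
Proof. move=> h1 h2. by rewrite -[kap * lam * w]mulrA h2 mulrN [kap * (w * lam)]mulrA h1 mulNr opprK mulrA. Qed.
Lemma sgn_eq (y z : bool) : y = z -> sgn C z - sgn C y = 0.
Proof. by move=> ->; rewrite subrr. Qed.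
End KFacts.
Arguments kk1 {C A b k}.
Arguments kC {C A b k}.
Arguments kb {C A b k}.
Arguments kev {C A}.
Arguments kev2 {C A}.

Section TensRel.
Variables (C : fieldType) (A AA : algType C) (t : A -> A -> AA)
  (liftAA : forall W : lmodType C, (A -> A -> W) -> AA -> W).
Hypothesis HAA : is_algtensor t liftAA.
Lemma tbil : bilin t. Proof. by case: HAA => [[]]. Qed.
Lemma tM a b' c d : t a b' * t c d = t (a * c) (b' * d).
Proof. by case: HAA. Qed.
Lemma t11 : t 1 1 = 1. Proof. by case: HAA. Qed.
Lemma tD1 x y z : t (x + y) z = t x z + t y z.
Proof. by rewrite (linD ((tbil).1 z)). Qed.
Lemma tD2 x y z : t z (x + y) = t z x + t z y.
Proof. by rewrite (linD ((tbil).2 z)). Qed.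
Lemma tZ1 a x z : t (a *: x) z = a *: t x z.
Proof. by rewrite (linZ ((tbil).1 z)). Qed.
Lemma tZ2 a x z : t z (a *: x) = a *: t z x.
Proof. by rewrite (linZ ((tbil).2 z)). Qed.
Lemma tN1 x z : t (- x) z = - t x z.
Proof. by rewrite (linN ((tbil).1 z)). Qed.
Lemma tN2 x z : t z (- x) = - t z x.
Proof. by rewrite (linN ((tbil).2 z)). Qed.
Lemma tB1 x y z : t (x - y) z = t x z - t y z.
Proof. by rewrite (linB ((tbil).1 z)). Qed.
Lemma tB2 x y z : t z (x - y) = t z x - t z y.
Proof. by rewrite (linB ((tbil).2 z)). Qed.
Lemma t01 z : t 0 z = 0.
Proof. by rewrite (lin0 ((tbil).1 z)). Qed.

Definition Dk (kap u : A) := t u 1 + t kap u.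
Lemma Dmul kap lam u v : Dk kap u * Dk lam v =
  t (u * v) 1 + t (u * lam) v + (t (kap * v) u + t (kap * lam) (u * v)).
Proof. by rewrite /Dk mulrDl !mulrDr !tM !mulr1 !mul1r. Qed.
Lemma Danti kap lam u v : lam * u = - (u * lam) -> kap * v = - (v * kap) ->
  kap * lam = lam * kap ->
  Dk kap u * Dk lam v + Dk lam v * Dk kap u =
  t (u * v + v * u) 1 + t (kap * lam) (u * v + v * u).
Proof.
move=> h1 h2 h3; rewrite !Dmul h1 h2 -h3 !tN1 tD1 tD2.
rewrite !addrA [LHS](ACl (((1*5)*(4*8))*((2*7)*(6*3)))%AC) /=.
by rewrite !subrr !addr0 !addrA.
Qed.
Lemma Dcomm X M nu w : X * nu = nu * X -> M * w = w * M -> M * nu = nu * M ->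
  (t X 1 + t M X) * Dk nu w - Dk nu w * (t X 1 + t M X) =
  t (X * w - w * X) 1 + t (M * nu) (X * w - w * X).
Proof.
move=> h1 h2 h3; rewrite /Dk !mulrDl !mulrDr !tM !mulr1 !mul1r h1 -h2 -h3 tB1 tB2.
rewrite !opprD !addrA [LHS](ACl (((1*5)*(4*8))*((2*7)*(3*6)))%AC) /=.
by rewrite !subrr !addr0 !addrA.
Qed.
End TensRel.
Arguments Dk {C A AA}.
Arguments tbil {C A AA t liftAA}.
Arguments tM {C A AA t liftAA}.
Arguments t11 {C A AA t liftAA}.
Arguments tD1 {C A AA t liftAA}.
Arguments tD2 {C A AA t liftAA}.
Arguments tZ1 {C A AA t liftAA}.
Arguments tZ2 {C A AA t liftAA}.
Arguments tN1 {C A AA t liftAA}.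
Arguments tN2 {C A AA t liftAA}.
Arguments tB1 {C A AA t liftAA}.
Arguments tB2 {C A AA t liftAA}.
Arguments t01 {C A AA t liftAA}.
Arguments Dmul {C A AA t liftAA}.
Arguments Danti {C A AA t liftAA}.
Arguments Dcomm {C A AA t liftAA}.

Section DeltaRel.
Variables (C : fieldType) (A AA : algType C) (b : bool -> nat -> A) (k : bool -> A)
  (t : A -> A -> AA) (liftAA : forall W : lmodType C, (A -> A -> W) -> AA -> W).
Hypotheses (Hr : PB_rels b k) (HAA : is_algtensor t liftAA).
Lemma Delta_rels : PB_rels (fun s i => t (b s i) 1 + t (k s) (b s i))
                            (fun s => t (k s) (k s)).
Proof.
have RR := Hr; case: RR => R1 R2 R3 R4.
split.
- move=> x y z i j l /=.
  change (t (b x i) 1 + t (k x) (b x i)) with (Dk t (k x) (b x i)).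
  change (t (b y j) 1 + t (k y) (b y j)) with (Dk t (k y) (b y j)).
  change (t (b z l) 1 + t (k z) (b z l)) with (Dk t (k z) (b z l)).
  rewrite (Danti HAA _ _ _ _ (kb Hr y x i) (kb Hr x y j) (kC Hr x y)).
  have h1 : (b x i * b y j + b y j * b x i) * k z = k z * (b x i * b y j + b y j * b x i).
    by rewrite mulrDl mulrDr (kev _ _ _ (kb Hr z x i) (kb Hr z y j)) (kev _ _ _ (kb Hr z y j) (kb Hr z x i)).
  have h2 := kev2 _ _ _ (kb Hr x z l) (kb Hr y z l).
  have h3 : k x * k y * k z = k z * (k x * k y) := esym (commrM (kC Hr z x) (kC Hr z y)).
  rewrite (Dcomm HAA _ _ _ _ h1 h2 h3).
  have R := R1 x y z i j l; simpl in R; rewrite R.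
  rewrite (tD1 HAA) (tD2 HAA) !(tZ1 HAA) !(tZ2 HAA) /Dk !scalerDr.
  have cK1 : ((sgn C z - sgn C y) * kd C j l) *: t (k x * k y * k z) (b x i) =
             ((sgn C z - sgn C y) * kd C j l) *: t (k x) (b x i).
    case: (eqVneq y z) => [->|h]; first by rewrite subrr mul0r !scale0r.
    by rewrite -mulrA (kk1 Hr _ _ h) mulr1.
  have cK2 : ((sgn C z - sgn C x) * kd C i l) *: t (k x * k y * k z) (b y j) =
             ((sgn C z - sgn C x) * kd C i l) *: t (k y) (b y j).
    case: (eqVneq x z) => [->|h]; first by rewrite subrr mul0r !scale0r.
    by rewrite (kC Hr x y) -mulrA (kk1 Hr _ _ h) mulr1.
  by rewrite cK1 cK2 addrACA.
- by rewrite /= (tM HAA) R2 (t11 HAA).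
- by rewrite /= (tM HAA) R3 (t11 HAA).
- move=> s u i /=.
  rewrite mulrDr mulrDl !(tM HAA) !mulr1 !mul1r (kb Hr s u i) (kC Hr u s) !(tN1 HAA) !(tN2 HAA).
  by rewrite addrACA !addNr addr0.
Qed.
End DeltaRel.

Section SRel.
Variables (C : fieldType) (A : algType C) (b : bool -> nat -> A) (k : bool -> A).
Hypothesis Hr : PB_rels b k.
Lemma op_anti (u v kap lam : A) : kap * v = - (v * kap) ->
  (u * kap) * (v * lam) = - ((u * v) * (kap * lam)).
Proof. move=> h. by rewrite -!mulrA [kap * (v * lam)]mulrA h mulNr mulrN -!mulrA. Qed.
Lemma assoc4 (a c X M : A) : c * X = X * c -> c * M = M * c ->
  (a * c) * (X * M) = (a * X) * (M * c).
Proof. move=> h1 h2. by rewrite -!mulrA [c * (X * M)]mulrA h1 -[X * c * M]mulrA h2. Qed.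
Lemma assoc5 (a c X M : A) : M * a = a * M ->
  (X * M) * (a * c) = (X * a) * (M * c).
Proof. move=> h. by rewrite -!mulrA [M * (a * c)]mulrA h -[a * M * c]mulrA. Qed.
Lemma Srel1 x y z i j l :
  let B' u m := b u m * k (~~ u) in
  let ac := B' y j * B' x i + B' x i * B' y j in
  B' z l * ac - ac * B' z l =
  ((sgn C z - sgn C y) * kd C j l) *: B' x i + ((sgn C z - sgn C x) * kd C i l) *: B' y j.
Proof.
move=> B' ac; rewrite /ac /B'.
have RR := Hr; case: RR => R1 R2 R3 R4.
rewrite (op_anti _ _ _ _ (kb Hr (~~ y) x i)) (op_anti _ _ _ _ (kb Hr (~~ x) y j)).
rewrite (kC Hr (~~ y) (~~ x)) -opprD -mulrDl [b y j * b x i + _]addrC.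
set X := b x i * b y j + b y j * b x i.
set M := k (~~ x) * k (~~ y).
have hX : k (~~ z) * X = X * k (~~ z).
  by rewrite /X mulrDr mulrDl (kev _ _ _ (kb Hr (~~ z) x i) (kb Hr (~~ z) y j))
    (kev _ _ _ (kb Hr (~~ z) y j) (kb Hr (~~ z) x i)).
have hM : M * b z l = b z l * M := kev2 _ _ _ (kb Hr (~~ x) z l) (kb Hr (~~ y) z l).
have hMk : k (~~ z) * M = M * k (~~ z) := commrM (kC Hr (~~ z) (~~ x)) (kC Hr (~~ z) (~~ y)).
have e1 : (b z l * k (~~ z)) * (X * M) = (b z l * X) * (M * k (~~ z)).
  exact: assoc4.
have e2 : (X * M) * (b z l * k (~~ z)) = (X * b z l) * (M * k (~~ z)).
  exact: assoc5.
rewrite mulrN mulNr opprK e1 e2 -mulNr -mulrDl addrC.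
have R := R1 x y z i j l; simpl in R; rewrite R.
rewrite mulrDl -!scalerAl.
have cS1 : ((sgn C z - sgn C y) * kd C j l) *: (b x i * (M * k (~~ z))) =
           ((sgn C z - sgn C y) * kd C j l) *: (b x i * k (~~ x)).
  case: (eqVneq y z) => [->|h]; first by rewrite subrr mul0r !scale0r.
  have h' : ~~ y != ~~ z by rewrite (inj_eq negb_inj).
  by rewrite /M -[k (~~ x) * k (~~ y) * k (~~ z)]mulrA (kk1 Hr _ _ h') mulr1.
have cS2 : ((sgn C z - sgn C x) * kd C i l) *: (b y j * (M * k (~~ z))) =
           ((sgn C z - sgn C x) * kd C i l) *: (b y j * k (~~ y)).
  case: (eqVneq x z) => [->|h]; first by rewrite subrr mul0r !scale0r.
  have h' : ~~ x != ~~ z by rewrite (inj_eq negb_inj).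
  by rewrite /M (kC Hr (~~ x)) -[k (~~ y) * k (~~ x) * k (~~ z)]mulrA (kk1 Hr _ _ h') mulr1.
by rewrite cS1 cS2.
Qed.
Lemma Srel4 s u i :
  b u i * k (~~ u) * k (~~ s) + k (~~ s) * (b u i * k (~~ u)) = 0.
Proof.
by rewrite mulrA (kb Hr) mulNr -!mulrA (kC Hr (~~ s) (~~ u)) addrN.
Qed.
End SRel.
Arguments Srel1 {C A b k}.
Arguments Srel4 {C A b k}.

Section Op.
Variables (K : pzRingType) (A : algType K).
Definition Aop : Type := A^c.
HB.instance Definition _ := GRing.NzRing.on Aop.
HB.instance Definition _ := GRing.Lmodule.copy Aop A.
Lemma opAl (a : K) (x y : Aop) : a *: (x * y) = ((a *: x : Aop) * y : Aop).
Proof. change (a *: ((y:A) * (x:A)) = (y:A) * (a *: (x:A))). exact: scalerAr. Qed.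
HB.instance Definition _ := GRing.Lmodule_isLalgebra.Build K Aop opAl.
Lemma opAr (a : K) (x y : Aop) : a *: (x * y) = (x * (a *: y : Aop) : Aop).
Proof. change (a *: ((y:A) * (x:A)) = (a *: (y:A)) * (x:A)). exact: scalerAl. Qed.
HB.instance Definition _ := GRing.Lalgebra_isAlgebra.Build K Aop opAr.
End Op.
Arguments Aop {K}.

Section OpRels.
Variables (C : fieldType) (A : algType C) (b : bool -> nat -> A) (k : bool -> A).
Hypothesis Hr : PB_rels b k.
Lemma S_rels : PB_rels (D := Aop A) (fun s i => (b s i * k (~~ s) : Aop A))
  (fun s => (k (~~ s) : Aop A)).
Proof.
have RR := Hr; case: RR => R1 R2 R3 R4.
split.
- move=> x y z i j l /=. exact (Srel1 Hr x y z i j l).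
- exact: R2.
- exact: R3.
- move=> s u i /=. exact (Srel4 Hr s u i).
Qed.
Lemma eps_rels : PB_rels (D := C^o) (fun _ _ => (0 : C^o)) (fun _ => (1 : C^o)).
Proof.
split.
- by move=> x y z i j l /=; rewrite !(mulr0, mul0r, scaler0, subrr, addr0, oppr0).
- by rewrite mulr1.
- by rewrite mulr1.
- by move=> s u i; rewrite mulr0 mul0r addr0.
Qed.
End OpRels.
Section Ind.
Variables (C : fieldType) (A : algType C) (b : bool -> nat -> A) (k : bool -> A).
Hypothesis HA : is_PB b k.
Variable P : A -> Prop.
Hypotheses (P1 : P 1) (PM : forall x y, P x -> P y -> P (x * y))
  (PL : forall (c : C) x y, P x -> P y -> P (c *: x + y))
  (Pb : forall s i, P (b s i)) (Pk : forall s, P (k s)).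
Definition Pbo : pred A := fun x => if excluded_middle_informative (P x) then true else false.
Lemma PboP x : reflect (P x) (x \in Pbo).
Proof. rewrite /in_mem /= /Pbo; case: excluded_middle_informative => h; constructor => //. Qed.
Record subA := SubA { sval : A; _ : sval \in Pbo }.
HB.instance Definition _ := [isSub for sval].
HB.instance Definition _ := [Choice of subA by <:].
Lemma Pcl : GRing.subsemialg_closed Pbo.
Proof.
have h0 : P 0.
  have := PL (-1) _ _ P1 P1. by rewrite scaleN1r addNr.
split.
- by apply/PboP.
- split; first by apply/PboP.
  move=> x y /PboP hx /PboP hy; apply/PboP. have := PL 1 _ _ hx hy. by rewrite scale1r.
- move=> a x /PboP hx; apply/PboP. have := PL a _ _ hx h0. by rewrite addr0.
- by move=> x y /PboP hx /PboP hy; apply/PboP; exact: PM.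
Qed.
HB.instance Definition _ := GRing.SubChoice_isSubAlgebra.Build C A Pbo subA Pcl.

Lemma A_ind_sec : forall x, P x.
Proof.
have bP s i : b s i \in Pbo by apply/PboP.
have kP s : k s \in Pbo by apply/PboP.
pose bS s i : subA := SubA _ (bP s i).
pose kS s : subA := SubA _ (kP s).
case: HA => Hrel Huniv.
have relS : PB_rels bS kS.
  case: Hrel => R1 R2 R3 R4; split.
  - move=> x y z i j l /=; apply: val_inj => /=. exact: R1.
  - apply: val_inj => /=. exact: R2.
  - apply: val_inj => /=. exact: R3.
  - move=> s u i; apply: val_inj => /=. exact: R4.
have [f [fh fb fk _]] := Huniv subA bS kS relS.
have [f0 [_ _ _ u0]] := Huniv A b k Hrel.
have e1 : forall x, val (f x) = f0 x.
  apply: u0.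
  - case: fh => fl fm f1; split.
    + by move=> a u v /=; rewrite fl.
    + by move=> x y /=; rewrite fm.
    + by rewrite /= f1.
  - by move=> s i /=; rewrite fb.
  - by move=> s /=; rewrite fk.
have e2 : forall x, x = f0 x.
  by apply: u0.
move=> x; rewrite (e2 x) -e1; apply/PboP; exact: valP.
Qed.
End Ind.
Arguments A_ind_sec {C A b k}.

Section Hopf.
Variables (C : fieldType) (A : algType C) (b : bool -> nat -> A) (k : bool -> A).
Hypothesis HA : is_PB b k.
Variables (AA : algType C) (t : A -> A -> AA)
  (liftAA : forall W : lmodType C, (A -> A -> W) -> AA -> W).
Hypothesis HAA : is_algtensor t liftAA.
Variables (Delta : A -> AA) (eps : A -> C) (S : A -> A).
Hypotheses (HDh : alg_hom Delta)
  (HDb : forall s i, Delta (b s i) = t (b s i) 1 + t (k s) (b s i))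
  (HDk : forall s, Delta (k s) = t (k s) (k s))
  (Heh : char_hom eps) (Heb : forall s i, eps (b s i) = 0) (Hek : forall s, eps (k s) = 1)
  (HSh : alg_antihom S) (HSb : forall s i, S (b s i) = b s i * k (~~ s))
  (HSk : forall s, S (k s) = k (~~ s)).

Let Hr : PB_rels b k := HA.1.
Lemma Dlin : lin Delta. Proof. by case: HDh. Qed.
Lemma DM x y : Delta (x * y) = Delta x * Delta y. Proof. by case: HDh. Qed.
Lemma D1 : Delta 1 = 1. Proof. by case: HDh. Qed.
Lemma liftL {W : lmodType C} {f : A -> A -> W} : bilin f -> lin (liftAA W f).
Proof. move=> bf; case: HAA => [[_ H]] _ _; by case: (H W f bf). Qed.
Lemma liftT {W : lmodType C} {f : A -> A -> W} : bilin f -> forall u v, liftAA W f (t u v) = f u v.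
Proof. move=> bf; case: HAA => [[_ H]] _ _; by case: (H W f bf). Qed.

Lemma rep_ex a : exists s : seq (A * A), Delta a == \sum_(p <- s) t p.1 p.2.
Proof.
suff [s h] : exists s : seq (A * A), Delta a = \sum_(p <- s) t p.1 p.2 by exists s; apply/eqP.
move: a; apply: (A_ind_sec HA) => [|x y [s1 h1] [s2 h2]|c x y [s1 h1] [s2 h2]|s i|s].
- by exists [:: (1, 1)]; rewrite big_seq1 /= D1 (t11 HAA).
- exists [seq (p.1 * q.1, p.2 * q.2) | p <- s1, q <- s2].
  rewrite big_allpairs_dep DM h1 h2 mulr_suml; apply: eq_bigr => p _.
  by rewrite mulr_sumr; apply: eq_bigr => q _; rewrite (tM HAA).
- exists ([seq (c *: p.1, p.2) | p <- s1] ++ s2).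
  rewrite big_cat big_map Dlin h1 h2 scaler_sumr; congr (_ + _).
  by apply: eq_bigr => p _; rewrite (tZ1 HAA).
- by exists [:: (b s i, 1); (k s, b s i)]; rewrite HDb big_cons big_seq1.
- by exists [:: (k s, k s)]; rewrite HDk big_seq1.
Qed.
Definition rep a := xchoose (rep_ex a).
Lemma repP a : Delta a = \sum_(p <- rep a) t p.1 p.2.
Proof. exact: (eqP (xchooseP (rep_ex a))). Qed.

Definition Fsum {W : lmodType C} (f : A -> A -> W) a := \sum_(p <- rep a) f p.1 p.2.
Lemma Flift {W : lmodType C} {f : A -> A -> W} : bilin f -> forall a, liftAA W f (Delta a) = Fsum f a.
Proof. move=> bf a; rewrite repP (lin_sum (liftL bf)); apply: eq_bigr => p _; exact: liftT. Qed.
Lemma Frep {W : lmodType C} {f : A -> A -> W} s a : bilin f ->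
  Delta a = \sum_(p <- s) t p.1 p.2 -> Fsum f a = \sum_(p <- s) f p.1 p.2.
Proof. move=> bf h; rewrite -Flift // h (lin_sum (liftL bf)); apply: eq_bigr => p _; exact: liftT. Qed.
Lemma Fprod {W : lmodType C} {f : A -> A -> W} x y : bilin f ->
  Fsum f (x * y) = \sum_(p <- rep x) \sum_(q <- rep y) f (p.1 * q.1) (p.2 * q.2).
Proof.
move=> bf; rewrite -Flift // DM !repP mulr_suml (lin_sum (liftL bf)); apply: eq_bigr => p _.
rewrite mulr_sumr (lin_sum (liftL bf)); apply: eq_bigr => q _; by rewrite (tM HAA) liftT.
Qed.
Lemma Flin {W : lmodType C} {f : A -> A -> W} : bilin f -> lin (Fsum f).
Proof. by move=> bf c x y; rewrite -!Flift // Dlin (liftL bf). Qed.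
Lemma Fb {W : lmodType C} {f : A -> A -> W} s i : bilin f ->
  Fsum f (b s i) = f (b s i) 1 + f (k s) (b s i).
Proof. move=> bf; rewrite (Frep [:: (b s i, 1); (k s, b s i)] _ bf); first by rewrite big_cons big_seq1.
by rewrite HDb big_cons big_seq1. Qed.
Lemma Fk {W : lmodType C} {f : A -> A -> W} s : bilin f -> Fsum f (k s) = f (k s) (k s).
Proof. move=> bf; rewrite (Frep [:: (k s, k s)] _ bf); first by rewrite big_seq1.
by rewrite HDk big_seq1. Qed.
Lemma F1 {W : lmodType C} {f : A -> A -> W} : bilin f -> Fsum f 1 = f 1 1.
Proof. move=> bf; rewrite (Frep [:: (1, 1)] _ bf); first by rewrite big_seq1.
by rewrite D1 big_seq1 (t11 HAA). Qed.

Lemma epsL a u v : eps (a *: u + v) = a * eps u + eps v. Proof. by case: Heh. Qed.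
Lemma epsM x y : eps (x * y) = eps x * eps y. Proof. by case: Heh. Qed.
Lemma eps1 : eps 1 = 1. Proof. by case: Heh. Qed.
Lemma SL : lin S. Proof. by case: HSh. Qed.
Lemma SM x y : S (x * y) = S y * S x. Proof. by case: HSh. Qed.
Lemma S1 : S 1 = 1. Proof. by case: HSh. Qed.
Lemma neqnb s : s != ~~ s. Proof. by case: s. Qed.
Lemma neqnb' s : ~~ s != s. Proof. by case: s. Qed.

Lemma bc1 : bilin (fun x y : A => eps x *: y).
Proof.
split => [y a u v | x a u v] /=; first by rewrite epsL scalerDl scalerA.
by rewrite scalerDr !scalerA mulrC.
Qed.
Lemma bc2 : bilin (fun x y : A => eps y *: x).
Proof.
split => [y a u v | x a u v] /=; last by rewrite epsL scalerDl scalerA.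
by rewrite scalerDr !scalerA mulrC.
Qed.
Lemma ba1 : bilin (fun x y : A => S x * y).
Proof.
split => [y a u v | x a u v] /=; first by rewrite SL mulrDl scalerAl.
by rewrite mulrDr scalerAr.
Qed.
Lemma ba2 : bilin (fun x y : A => x * S y).
Proof.
split => [y a u v | x a u v] /=; first by rewrite mulrDl scalerAl.
by rewrite SL mulrDr scalerAr.
Qed.

Lemma counit1 a : Fsum (fun x y => eps x *: y) a = a.
Proof.
move: a; apply: (A_ind_sec HA) => [|x y IHx IHy|c x y IHx IHy|s i|s].
- by rewrite (F1 bc1) eps1 scale1r.
- rewrite (Fprod _ _ bc1) -[in RHS]IHx -[in RHS]IHy /Fsum mulr_suml; apply: eq_bigr => p _.
  rewrite mulr_sumr; apply: eq_bigr => q _.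
  by rewrite -scalerAl -scalerAr scalerA epsM.
- by rewrite (Flin bc1) IHx IHy.
- by rewrite (Fb _ _ bc1) Heb scale0r add0r Hek scale1r.
- by rewrite (Fk _ bc1) Hek scale1r.
Qed.
Lemma counit2 a : Fsum (fun x y => eps y *: x) a = a.
Proof.
move: a; apply: (A_ind_sec HA) => [|x y IHx IHy|c x y IHx IHy|s i|s].
- by rewrite (F1 bc2) eps1 scale1r.
- rewrite (Fprod _ _ bc2) -[in RHS]IHx -[in RHS]IHy /Fsum mulr_suml; apply: eq_bigr => p _.
  rewrite mulr_sumr; apply: eq_bigr => q _.
  by rewrite -scalerAl -scalerAr scalerA epsM.
- by rewrite (Flin bc2) IHx IHy.
- by rewrite (Fb _ _ bc2) Heb scale0r addr0 eps1 scale1r.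
- by rewrite (Fk _ bc2) Hek scale1r.
Qed.
Lemma antipode1 a : Fsum (fun x y => S x * y) a = eps a *: 1.
Proof.
move: a; apply: (A_ind_sec HA) => [|x y IHx IHy|c x y IHx IHy|s i|s].
- by rewrite (F1 ba1) S1 mul1r eps1 scale1r.
- rewrite (Fprod _ _ ba1).
  transitivity (\sum_(q <- rep y) S q.1 * (Fsum (fun x y => S x * y) x) * q.2).
    rewrite exchange_big; apply: eq_bigr => q _; rewrite /Fsum mulr_sumr mulr_suml.
    by apply: eq_bigr => p _; rewrite SM !mulrA.
  rewrite IHx.
  under eq_bigr => q _ do rewrite -scalerAr mulr1 -scalerAl.
  rewrite -scaler_sumr.
  have := IHy; rewrite /Fsum => ->.
  by rewrite epsM scalerA.
- by rewrite (Flin ba1) IHx IHy epsL scalerDl scalerA.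
- by rewrite (Fb _ _ ba1) HSb HSk mulr1 Heb scale0r (kb Hr) addrN.
- by rewrite (Fk _ ba1) HSk (kk1 Hr _ _ (neqnb' s)) Hek scale1r.
Qed.
Lemma antipode2 a : Fsum (fun x y => x * S y) a = eps a *: 1.
Proof.
move: a; apply: (A_ind_sec HA) => [|x y IHx IHy|c x y IHx IHy|s i|s].
- by rewrite (F1 ba2) S1 mul1r eps1 scale1r.
- rewrite (Fprod _ _ ba2).
  transitivity (\sum_(p <- rep x) p.1 * (Fsum (fun x y => x * S y) y) * S p.2).
    apply: eq_bigr => p _; rewrite /Fsum mulr_sumr mulr_suml.
    by apply: eq_bigr => q _; rewrite SM !mulrA.
  rewrite IHy.
  under eq_bigr => q _ do rewrite -scalerAr mulr1 -scalerAl.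
  rewrite -scaler_sumr.
  have := IHx; rewrite /Fsum => ->.
  by rewrite epsM scalerA mulrC.
- by rewrite (Flin ba2) IHx IHy epsL scalerDl scalerA.
- rewrite (Fb _ _ ba2) HSb S1 mulr1 mulrA (kb Hr) mulNr -mulrA (kk1 Hr _ _ (neqnb s)).
  by rewrite mulr1 addrN Heb scale0r.
- by rewrite (Fk _ ba2) HSk (kk1 Hr _ _ (neqnb s)) Hek scale1r.
Qed.

Definition tri {W : lmodType C} (h : A -> A -> A -> W) :=
  [/\ forall q r, lin (fun p => h p q r), forall p r, lin (fun q => h p q r)
    & forall p q, lin (h p q)].
Definition LC {W : lmodType C} (h : A -> A -> A -> W) a :=
  Fsum (fun x y => Fsum (fun p q => h p q y) x) a.
Definition RC {W : lmodType C} (h : A -> A -> A -> W) a :=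
  Fsum (fun x y => Fsum (fun p q => h x p q) y) a.
Lemma bil_in1 {W : lmodType C} {h : A -> A -> A -> W} (th : tri h) y :
  bilin (fun p q => h p q y).
Proof. by case: th. Qed.
Lemma bil_in2 {W : lmodType C} {h : A -> A -> A -> W} (th : tri h) x :
  bilin (fun p q => h x p q).
Proof. by case: th. Qed.
Lemma bil_out1 {W : lmodType C} {h : A -> A -> A -> W} (th : tri h) :
  bilin (fun x y => Fsum (fun p q => h p q y) x).
Proof.
split => [y|x]; first exact: (Flin (bil_in1 th y)).
rewrite /Fsum; apply: lin_sumf => p; by case: th.
Qed.
Lemma bil_out2 {W : lmodType C} {h : A -> A -> A -> W} (th : tri h) :
  bilin (fun x y => Fsum (fun p q => h x p q) y).
Proof.
split => [y|x]; last exact: (Flin (bil_in2 th x)).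
rewrite /Fsum; apply: lin_sumf => p; by case: th.
Qed.

Lemma coas_gen a : forall (W : lmodType C) (h : A -> A -> A -> W), tri h -> LC h a = RC h a.
Proof.
move: a; apply: (A_ind_sec HA) => [|x y IHx IHy|c x y IHx IHy|s i|s] W h th.
- by rewrite /LC /RC (F1 (bil_out1 th)) (F1 (bil_out2 th)) (F1 (bil_in1 th 1)) (F1 (bil_in2 th 1)).
- pose h1 := fun U1 U2 P2 => \sum_(q <- rep y) \sum_(v <- rep q.1) h (U1 * v.1) (U2 * v.2) (P2 * q.2).
  have th1 : tri h1.
    case: th => t1 t2 t3; split => [Q R|P R|P Q]; apply: lin_sumf => q; apply: lin_sumf => v.
    + exact: (@lin_mulr _ _ _ (fun z => h z (Q * v.2) (R * q.2)) v.1 (t1 _ _)).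
    + exact: (@lin_mulr _ _ _ (fun z => h (P * v.1) z (R * q.2)) v.2 (t2 _ _)).
    + exact: (@lin_mulr _ _ _ (fun z => h (P * v.1) (Q * v.2) z) q.2 (t3 _ _)).
  have th2 (p u : A * A) : tri (fun V1 V2 Q2 => h (p.1 * V1) (u.1 * V2) (u.2 * Q2)).
    case: th => t1 t2 t3; split => [Q R|P R|P Q].
    + exact: (@lin_mull _ _ _ (fun z => h z (u.1 * Q) (u.2 * R)) p.1 (t1 _ _)).
    + exact: (@lin_mull _ _ _ (fun z => h (p.1 * P) z (u.2 * R)) u.1 (t2 _ _)).
    + exact: (@lin_mull _ _ _ (fun z => h (p.1 * P) (u.1 * Q) z) u.2 (t3 _ _)).
  have e1 : LC h (x * y) = LC h1 x.
    rewrite /LC (Fprod _ _ (bil_out1 th)) [in RHS]/Fsum; apply: eq_bigr => p _.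
    under eq_bigr => q _ do rewrite (Fprod _ _ (bil_in1 th (p.2 * q.2))).
    by rewrite exchange_big.
  have e3 : RC h (x * y) = \sum_(p <- rep x) \sum_(u <- rep p.2)
      RC (fun V1 V2 Q2 => h (p.1 * V1) (u.1 * V2) (u.2 * Q2)) y.
    rewrite /RC (Fprod _ _ (bil_out2 th)); apply: eq_bigr => p _.
    under eq_bigr => q _ do rewrite (Fprod _ _ (bil_in2 th (p.1 * q.1))).
    by rewrite exchange_big.
  rewrite e1 (IHx _ _ th1) e3.
  transitivity (\sum_(p <- rep x) \sum_(u <- rep p.2)
      LC (fun V1 V2 Q2 => h (p.1 * V1) (u.1 * V2) (u.2 * Q2)) y); first by [].
  apply: eq_bigr => p _; apply: eq_bigr => u _; exact: IHy (th2 p u).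
- have := IHx W h th; have := IHy W h th.
  by rewrite /LC /RC (Flin (bil_out1 th)) (Flin (bil_out2 th)) => -> ->.
- rewrite /LC /RC (Fb _ _ (bil_out1 th)) (Fb _ _ (bil_out2 th)) (Fb _ _ (bil_in1 th 1)).
  rewrite (Fk _ (bil_in1 th (b s i))) (F1 (bil_in2 th (b s i))) (Fb _ _ (bil_in2 th (k s))).
  by rewrite addrA.
- by rewrite /LC /RC (Fk _ (bil_out1 th)) (Fk _ (bil_out2 th)) (Fk _ (bil_in1 th (k s))) (Fk _ (bil_in2 th (k s))).
Qed.

Variables (AAA : lmodType C) (t3 : AA -> A -> AAA)
  (lift3 : forall W : lmodType C, (AA -> A -> W) -> AAA -> W).
Hypothesis HAAA : is_tensor t3 lift3.
Lemma t3bil : bilin t3. Proof. by case: HAAA. Qed.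
Definition T3 := fun p q r => t3 (t p q) r.
Lemma triT : tri T3.
Proof.
split => [q r|p r|p q].
- exact: (@lin_comp _ _ _ _ (fun p => t p q) (fun u => t3 u r) ((tbil HAA).1 q) (t3bil.1 r)).
- exact: (@lin_comp _ _ _ _ (fun p0 => t p p0) (fun u => t3 u r) ((tbil HAA).2 p) (t3bil.1 r)).
- exact: (t3bil.2 (t p q)).
Qed.
Lemma coassoc a : liftAA AAA (fun x y => t3 (Delta x) y) (Delta a) =
   liftAA AAA (fun x y => liftAA AAA (fun p q => t3 (t x p) q) (Delta y)) (Delta a).
Proof.
have b1 : bilin (fun x y => t3 (Delta x) y).
  split => [y|x]; first exact: (@lin_comp _ _ _ _ Delta (fun u => t3 u y) Dlin (t3bil.1 y)).
  exact: (t3bil.2 (Delta x)).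
have e2 : forall x y, liftAA AAA (fun p q => t3 (t x p) q) (Delta y) = Fsum (fun p q => T3 x p q) y.
  move=> x y; apply: Flift; exact: (bil_in2 triT x).
have b2 : bilin (fun x y => liftAA AAA (fun p q => t3 (t x p) q) (Delta y)).
  have [h1 h2] := bil_out2 triT.
  split => [y|x] c u v /=; rewrite !e2; [exact: (h1 y c u v) | exact: (h2 x c u v)].
rewrite (Flift b1) (Flift b2).
transitivity (LC T3 a).
  rewrite /LC /Fsum; apply: eq_bigr => p _.
  by rewrite repP (lin_sum (t3bil.1 p.2)).
rewrite (coas_gen a _ _ triT) /RC /Fsum; apply: eq_bigr => p _.
by rewrite e2.
Qed.

Lemma hopf_all : is_hopf t liftAA t3 Delta eps S.
Proof.
split.
- split; first exact: HDh. split; [exact: Heh | exact: SL].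
- exact: coassoc.
- by move=> a; split; [rewrite (Flift bc1) counit1 | rewrite (Flift bc2) counit2].
- by move=> a; split; [rewrite (Flift ba1) antipode1 | rewrite (Flift ba2) antipode2].
Qed.
End Hopf.

Theorem mainTheorem2 (R : realType)
  (A : algType R[i]) (b : bool -> nat -> A) (k : bool -> A)
  (HA : is_PB b k)
  (AA : algType R[i]) (t : A -> A -> AA)
  (liftAA : forall W : lmodType R[i], (A -> A -> W) -> AA -> W)
  (HAA : is_algtensor t liftAA)
  (AAA : lmodType R[i]) (t3 : AA -> A -> AAA)
  (lift3 : forall W : lmodType R[i], (AA -> A -> W) -> AAA -> W)
  (HAAA : is_tensor t3 lift3) :
  exists (Delta : A -> AA) (eps : A -> R[i]) (S : A -> A),
    [/\ (* defining values on generators *)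
        (forall s i, Delta (b s i) = t (b s i) 1 + t (k s) (b s i)) /\
        (forall s, Delta (k s) = t (k s) (k s)),
        (forall s i, eps (b s i) = 0) /\ (forall s, eps (k s) = 1),
        (forall s i, S (b s i) = b s i * k (~~ s)) /\ (forall s, S (k s) = k (~~ s)),
        (* uniqueness *)
        (forall Delta' : A -> AA, alg_hom Delta' ->
           (forall s i, Delta' (b s i) = t (b s i) 1 + t (k s) (b s i)) ->
           (forall s, Delta' (k s) = t (k s) (k s)) -> forall x, Delta' x = Delta x) /\
        (forall eps' : A -> R[i], char_hom eps' ->
           (forall s i, eps' (b s i) = 0) -> (forall s, eps' (k s) = 1) ->
           forall x, eps' x = eps x) /\
        (forall S' : A -> A, alg_antihom S' ->
           (forall s i, S' (b s i) = b s i * k (~~ s)) -> (forall s, S' (k s) = k (~~ s)) ->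
           forall x, S' x = S x) /\
        alg_antihom S &
        (* Hopf algebra *)
        is_hopf t liftAA t3 Delta eps S].
Proof.
have HA' := HA; case: HA' => Hr Hu.
have [D [Dh Db Dk Du]] := Hu AA _ _ (@Delta_rels _ _ _ _ _ _ _ Hr HAA).
have [e [eh eb ek eu]] := Hu (R[i]^o) _ _ (eps_rels R[i]).
have [Sf [Sh Sb Sk Su]] := Hu (Aop A) _ _ (@S_rels _ _ _ _ Hr).
have eh' : char_hom (e : A -> R[i]) by exact eh.
have Sh' : alg_antihom (Sf : A -> A) by exact Sh.
exists D, (e : A -> R[i]), (Sf : A -> A).
split.
- by split.
- by split.
- by split.
- split; first by move=> D' hD' hb hk x; apply: Du.
  split; first by move=> e' he' hb hk x; apply: eu => //; exact he'.
  split; last exact Sh'.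
  by move=> S' hS' hb hk x; apply: Su => //; exact hS'.
- exact: (@hopf_all _ _ _ _ HA _ _ _ HAA _ _ _ Dh Db Dk eh' eb ek Sh' Sb Sk _ _ _ HAAA).
Qed.
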